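(* Assume (A1) and (A5). Then: (1) For every $1\le i\le n$ and all $\xi,\eta\in\mathscr C$ with $\xi^i(0)-D^i(\xi)=\eta^i(0)-D^i(\eta)$, there exists $\zeta\in\mathscr C$ with $\zeta\le\xi\wedge\eta$ and $\zeta^i(0)-D^i(\zeta)=\xi^i(0)-D^i(\xi)=\eta^i(0)-D^i(\eta)$. (2) For all $\mu,\nu\in\mathscr P_2(\mathscr C)$ there exists $\tilde\mu\in\mathscr P_2(\mathscr C)$ with $\tilde\mu\le_D\mu$ and $\tilde\mu\le_D\nu$.
   Context: Fix $n\ge1$, $r_0>0$, $\mathscr C=C([-r_0,0];\mathbb R^n)$ with $\|h\|_\infty=\sup_\theta|h(\theta)|$; $\mathscr P_2(\mathscr C)$ the probability measures on $\mathscr C$ with finite second moment of $\|\cdot\|_\infty$. $D:\mathscr C\to\mathbb R^n$; superscript $i$ denotes the $i$-th coordinate. Order: for $\xi,\eta\in\mathscr C$, $\xi\le\eta$ iff $\xi(\theta)\le\eta(\theta)$ coordinatewise for all $\theta\in[-r_0,0]$; $(\xi\wedge\eta)_i=\xi_i\wedge\eta_i$ pointwise; $\xi\le_D\eta$ iff $\xi\le\eta$ and $\xi(0)-D(\xi)\le\eta(0)-D(\eta)$ (coordinatewise in $\mathbb R^n$). $f:\mathscr C\to\mathbb R$ is $D$-increasing if $\xi\le_D\eta\Rightarrow f(\xi)\le f(\eta)$; for probability measures, $\mu\le_D\nu$ iff $\mu(f)\le\nu(f)$ for all bounded measurable $D$-increasing $f$. (A1) $D(0)=0$ and $D(\xi)\ge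 D(\eta)$ whenever $\xi\ge\eta$. (A5) There is $\kappa\in(0,1)$ with $|D(\xi)-D(\eta)|\le\kappa\max_{1\le i\le n}\|\xi^i-\eta^i\|_\infty$. *)

(* Defs.v *)
From HB Require Import structures.
From mathcomp Require Import all_boot all_order all_algebra.
From mathcomp Require Import all_classical all_reals all_analysis.
Set Implicit Arguments. Unset Strict Implicit. Unset Printing Implicit Defensive.
Import Order.TTheory GRing.Theory Num.Theory numFieldNormedType.Exports.
Local Open Scope classical_set_scope.
Local Open Scope ring_scope.

Section Defs.
Variables (R : realType) (n : nat) (r0 : R).

Definition Iint : set R := `[- r0, 0]%classic.

(* clamp t into [-r0,0]; used to make the representation of C canonical *)
Definition clamp (t : R) : R := Num.max (- r0) (Num.min 0 t).

Definition eucl (x : 'I_n -> R) : R := Num.sqrt (\sum_(i < n) x i ^+ 2).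

(* membership in C([-r0,0];R^n): each coordinate continuous on [-r0,0];
   values outside [-r0,0] are fixed by clamping, so that elements of C are
   exactly the continuous functions on [-r0,0]. *)
Definition isC (h : 'I_n -> R -> R) : Prop :=
  (forall i, {within Iint, continuous (h i : R -> R)}) /\
  (forall i t, h i t = h i (clamp t)).

Definition C := {h : 'I_n -> R -> R | isC h}.

HB.instance Definition _ := gen_eqMixin C.
HB.instance Definition _ := gen_choiceMixin C.

Lemma isC0 : isC (fun _ _ => 0).
Proof. by split => // i; apply: continuous_subspaceT => x; apply: cst_continuous. Qed.

Definition C0 : C := exist _ _ isC0.
HB.instance Definition _ := isPointed.Build C C0.

Definition ev (h : C) (i : 'I_n) (t : R) : R := proj1_sig h i t.

Definition supn (h : C) : R := sup [set eucl (fun i => ev h i t) | t in Iint].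
Definition supd (x y : C) : R :=
  sup [set eucl (fun i => ev x i t - ev y i t) | t in Iint].
Definition supdi (i : 'I_n) (x y : C) : R :=
  sup [set `|ev x i t - ev y i t| | t in Iint].

Definition openC : set (set C) :=
  [set A | forall x, A x -> exists2 e : R, 0 < e & forall y, supd x y < e -> A y].
Definition Cm := g_sigma_algebraType openC.

Definition leC (x y : C) : Prop := forall i t, Iint t -> ev x i t <= ev y i t.
Definition le_meet (z x y : C) : Prop :=
  forall i t, Iint t -> ev z i t <= Num.min (ev x i t) (ev y i t).

Variable D : C -> 'I_n -> R.
Definition Dres (x : C) (i : 'I_n) : R := ev x i 0 - D x i.
Definition leD (x y : C) : Prop := leC x y /\ forall i, Dres x i <= Dres y i.

Definition D_increasing (f : C -> R) : Prop := forall x y, leD x y -> f x <= f y.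

Definition bounded_measurable (f : Cm -> R) : Prop :=
  measurable_fun setT f /\ exists M : R, forall x, `|f x| <= M.

Definition leDmeas (mu nu : probability Cm R) : Prop :=
  forall f : Cm -> R, bounded_measurable f -> D_increasing f ->
    (\int[mu]_x (f x)%:E <= \int[nu]_x (f x)%:E)%E.

Definition P2 (mu : probability Cm R) : Prop :=
  (\int[mu]_x ((supn x) ^+ 2)%:E < +oo)%E.

Definition A1 : Prop :=
  (forall i, D C0 i = 0) /\ (forall x y, leC y x -> forall i, D y i <= D x i).
Definition A5 : Prop :=
  exists2 kappa : R, 0 < kappa < 1 &
    forall x y, eucl (fun i => D x i - D y i) <= kappa * \big[Num.max/0]_(i < n) supdi i x y.

End Defs.

(* Main.v *)
Require Import Defs.
From HB Require Import structures.
From mathcomp Require Import all_boot all_order all_algebra.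
From mathcomp Require Import all_classical all_reals all_analysis.
From mathcomp Require Import ring lra.
From mathcomp Require Import measurable_realfun.
Import Order.TTheory GRing.Theory Num.Theory numFieldNormedType.Exports.
Import archimedean.Num.Def archimedean.Num.Theory.
Local Open Scope classical_set_scope.
Local Open Scope ring_scope.
Set Implicit Arguments. Unset Strict Implicit. Unset Printing Implicit Defensive.
Section Mono.
Local Open Scope ereal_scope.
Lemma int_mono_nm (R : realType) d (T : measurableType d) (mu : {measure set T -> \bar R})
  (f g : T -> \bar R) :
  (forall x, 0 <= f x) -> (forall x, f x <= g x) -> \int[mu]_x f x <= \int[mu]_x g x.
Proof.
move=> f0 fg.
have g0 : forall x, 0 <= g x by move=> x; exact: le_trans (f0 x) (fg x).
rewrite /integral /=.
rewrite !patch_setT.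
have E (h : T -> \bar R) : (forall x, 0 <= h x) -> h^\- = (fun _ => 0).
  by move=> h0; apply/funext => x; apply: (ge0_funenegE (D := setT)) => //; rewrite inE.
rewrite (E f f0) (E g g0); apply: leeB => //.
apply: ereal_sup_le => _ [h /= hf <-]; exists h => //= x.
apply: le_trans (hf x) _; rewrite !funeposE.
by apply: le_max2 => //.
Qed.
End Mono.
Section Basics.
Variables (R : realType) (n : nat) (r0 : R).
Hypothesis r0pos : 0 < r0.
Local Notation CC := (C n r0).

Lemma IintP t : Iint r0 t <-> -r0 <= t <= 0.
Proof. by rewrite /Iint /= in_itv /=. Qed.

Lemma Iint0 : Iint r0 0.
Proof. by apply/IintP; rewrite lexx andbT oppr_le0 ltW. Qed.

Lemma coord_bound (h : CC) i : exists B, 0 <= B /\ forall t, Iint r0 t -> `|ev h i t| <= B.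
Proof.
have [cont _] : @isC R n r0 (proj1_sig h) := proj2_sig h.
have hab : -r0 <= 0 by rewrite oppr_le0 ltW.
have [c1 c1in Hmax] := EVT_max hab (cont i).
have [c2 c2in Hmin] := EVT_min hab (cont i).
exists (Num.max `|proj1_sig h i c1| `|proj1_sig h i c2|); split.
  by rewrite le_max normr_ge0.
move=> t /IintP tin.
have tin' : t \in `[-r0, 0] by rewrite in_itv /=.
rewrite /ev le_max; have := Hmax t tin'; have := Hmin t tin'.
move=> h2 h1.
case: (lerP 0 (proj1_sig h i t)) => h0.
  by rewrite ger0_norm //; apply/orP; left; apply: le_trans h1 (ler_norm _).
rewrite ltr0_norm //; apply/orP; right.
by rewrite -normrN; apply: le_trans (ler_norm _); rewrite lerN2.
Qed.
End Basics.
Section Eucl.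
Variables (R : realType) (n : nat).
Implicit Types v : 'I_n -> R.

Lemma eucl_ge0 v : 0 <= eucl v.
Proof. exact: sqrtr_ge0. Qed.

Lemma coord_le_eucl v i : `|v i| <= eucl v.
Proof.
rewrite /eucl -sqrtr_sqr ler_sqrt; last by apply: sumr_ge0 => j _; exact: sqr_ge0.
by rewrite (bigD1 i) //= lerDl sumr_ge0 // => j _; exact: sqr_ge0.
Qed.

Lemma eucl_le_sum v : eucl v <= \sum_i `|v i|.
Proof.
have T0 : 0 <= \sum_i `|v i| by apply: sumr_ge0 => j _.
rewrite /eucl -(ger0_norm T0) -sqrtr_sqr ler_sqrt; last exact: sqr_ge0.
rewrite expr2 mulr_suml; apply: ler_sum => i _.
have -> : v i ^+ 2 = `|v i| * `|v i| by rewrite -normrM -expr2 ger0_norm // sqr_ge0.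
apply: ler_wpM2l => //.
by rewrite (bigD1 i) //= lerDl sumr_ge0.
Qed.

Lemma eucl_le_cst v M : (forall i, `|v i| <= M) -> eucl v <= Num.sqrt (n%:R * M ^+ 2).
Proof.
move=> H; rewrite /eucl ler_sqrt; last first.
  by apply: mulr_ge0 => //; exact: sqr_ge0.
have Hi : forall i, v i ^+ 2 <= M ^+ 2.
  move=> i; have M0 : 0 <= M by apply: le_trans (H i).
  rewrite -[v i ^+ 2]ger0_norm ?sqr_ge0 // normrX.
  by apply: lerXn2r => //; rewrite nnegrE.
apply: le_trans (ler_sum _ (fun i _ => Hi i)) _.
by rewrite sumr_const card_ord mulr_natl.
Qed.
End Eucl.
Section Supd.
Variables (R : realType) (n : nat) (r0 : R).
Hypothesis r0pos : 0 < r0.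
Local Notation CC := (C n r0).

Lemma coord_bound_all (h : CC) : exists B, 0 <= B /\ forall i t, Iint r0 t -> `|ev h i t| <= B.
Proof.
have [f Hf] := choice (fun i => coord_bound r0pos h i).
exists (\sum_i f i); split; first by apply: sumr_ge0 => i _; case: (Hf i).
move=> i t It; apply: le_trans ((Hf i).2 t It) _.
by rewrite (bigD1 i) //= lerDl sumr_ge0 // => j _; case: (Hf j).
Qed.

Lemma has_ub_supd (x y : CC) :
  has_ubound [set eucl (fun i => ev x i t - ev y i t) | t in Iint r0].
Proof.
have [Bx [_ Hx]] := coord_bound_all x; have [By [_ Hy]] := coord_bound_all y.
exists (\sum_(i < n) (Bx + By)) => _ [t It <-].
apply: le_trans (eucl_le_sum _) _; apply: ler_sum => i _.
by apply: le_trans (ler_normB _ _) _; apply: lerD; [exact: Hx|exact: Hy].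
Qed.

Lemma has_ub_supdi (x y : CC) i :
  has_ubound [set `|ev x i t - ev y i t| | t in Iint r0].
Proof.
have [M HM] := has_ub_supd x y.
exists M => _ [t It <-]; apply: le_trans (coord_le_eucl (fun i => ev x i t - ev y i t) i) _.
by apply: HM; exists t.
Qed.

Lemma supd_ge (x y : CC) i t : Iint r0 t -> `|ev x i t - ev y i t| <= supd x y.
Proof.
move=> It; apply: le_trans (coord_le_eucl (fun i => ev x i t - ev y i t) i) _.
by apply: ub_le_sup; [exact: has_ub_supd | exists t].
Qed.

Lemma supdi_ge (x y : CC) i t : Iint r0 t -> `|ev x i t - ev y i t| <= supdi i x y.
Proof. by move=> It; apply: ub_le_sup; [exact: has_ub_supdi | exists t]. Qed.

Lemma supdi_ge0 (x y : CC) i : 0 <= supdi i x y.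
Proof. exact: le_trans (normr_ge0 _) (supdi_ge x y i (Iint0 r0pos)). Qed.

Lemma supdi_le (x y : CC) i M : (forall t, Iint r0 t -> `|ev x i t - ev y i t| <= M) ->
  supdi i x y <= M.
Proof.
move=> H; apply: ge_sup; first by exists (`|ev x i 0 - ev y i 0|); exists 0 => //; exact: Iint0.
by move=> _ [t It <-]; exact: H.
Qed.

Lemma supdi_le_supd (x y : CC) i : supdi i x y <= supd x y.
Proof. by apply: supdi_le => t It; exact: supd_ge. Qed.

Lemma maxsupdi_le (x y : CC) M : 0 <= M -> (forall i, supdi i x y <= M) ->
  \big[Num.max/0]_i supdi i x y <= M.
Proof. by move=> M0 H; apply: bigmax_le. Qed.

End Supd.
Section Consts.
Variables (R : realType) (n : nat) (r0 : R).
Hypothesis r0pos : 0 < r0.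
Local Notation CC := (C n r0).

Lemma isC_cst (c : R) : @isC R n r0 (fun _ _ => c).
Proof. by split => // i; apply: continuous_subspaceT => x; apply: cst_continuous. Qed.

Definition cstC (c : R) : CC := exist _ _ (isC_cst c).

Lemma ev_cstC c i t : ev (cstC c) i t = c.
Proof. by []. Qed.

Lemma isC_meet (x y : CC) (s : R) :
  @isC R n r0 (fun i t => Num.min (ev x i t) (ev y i t) - s).
Proof.
have [cx kx] : @isC R n r0 (proj1_sig x) := proj2_sig x.
have [cy ky] : @isC R n r0 (proj1_sig y) := proj2_sig y.
split => [i|i t]; last by rewrite /ev kx ky.
move=> t.
have h1 := continuous_min (cx i t) (cy i t).
have h2 : {for t, continuous (fun _ : subspace (Iint r0) => s)} by exact: cvg_cst.
exact: (continuousB h1 h2).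
Qed.

Definition meetC (x y : CC) (s : R) : CC := exist _ _ (isC_meet x y s).

Lemma ev_meetC x y s i t : ev (meetC x y s) i t = Num.min (ev x i t) (ev y i t) - s.
Proof. by []. Qed.

End Consts.
Section Part2a.
Variables (R : realType) (n : nat) (r0 : R).
Hypothesis r0pos : 0 < r0.
Hypothesis n0 : (0 < n)%N.
Local Notation CC := (C n r0).
Local Notation CM := (Cm n r0).

Definition Sn (x : CC) : R := \big[Num.max/0]_i supdi i x (C0 n r0).

Lemma ev_C0 i t : ev (C0 n r0) i t = 0. Proof. by []. Qed.

Lemma Sn_ge (x : CC) i t : Iint r0 t -> `|ev x i t| <= Sn x.
Proof.
move=> It; have := supdi_ge r0pos x (C0 n r0) i It; rewrite ev_C0 subr0 => h.
apply: le_trans h _; exact: (le_bigmax _ (fun j => supdi j x (C0 n r0)) i).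
Qed.

Lemma Sn_ge0 (x : CC) : 0 <= Sn x.
Proof. exact: le_trans (normr_ge0 _) (Sn_ge x (Ordinal n0) (Iint0 r0pos)). Qed.

Lemma Sn_le (x : CC) M : 0 <= M -> (forall i t, Iint r0 t -> `|ev x i t| <= M) -> Sn x <= M.
Proof.
move=> M0 H; apply: bigmax_le => // i _; apply: (supdi_le r0pos) => t It.
by rewrite ev_C0 subr0; exact: H.
Qed.

Lemma Sn_open a : @Defs.openC R n r0 [set x | a < Sn x].
Proof.
move=> x /= ax.
have [a0|a0] := ltP a 0.
  exists 1 => // y _; exact: lt_le_trans a0 (Sn_ge0 y).
have [j hj] : exists j, a < supdi j x (C0 n r0).
  apply: contrapT => H; move: ax; apply/negP; rewrite -leNgt.
  apply: bigmax_le => // j _; rewrite leNgt; apply/negP => hj; apply: H; by exists j.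
have [_ [t It <-] ht] := sup_gt (ex_intro _ _ (ex_intro2 _ _ 0 (Iint0 r0pos) erefl)) hj.
rewrite ev_C0 subr0 in ht.
exists (`|ev x j t| - a); first by rewrite subr_gt0.
move=> y hy /=.
have h1 := supd_ge r0pos x y j It.
apply: lt_le_trans (Sn_ge y j It).
have h2 : `|ev x j t| <= `|ev x j t - ev y j t| + `|ev y j t|.
  by apply: le_trans (ler_normD _ _); rewrite subrK.
lra.
Qed.

Lemma Sn_meas : measurable_fun [set: CM] (Sn : CM -> R).
Proof.
move=> _; apply: (measurability _ (measurable_realfun.RGenOInfty.measurableE R)) => //.
move=> /= _ [_ [a ->] <-]; rewrite preimage_itvoy setTI.
apply: sub_sigma_algebra; exact: Sn_open.
Qed.

Lemma supn_eq (y : CC) : supn y = supd y (C0 n r0).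
Proof.
rewrite /supn /supd; congr sup; apply/funext => z; apply/propext.
split => -[t It <-]; exists t => //; congr eucl; apply/funext => i;
  by rewrite ev_C0 subr0.
Qed.

Lemma supn_ge0 (y : CC) : 0 <= supn y.
Proof.
rewrite supn_eq; apply: le_trans (supd_ge r0pos y (C0 n r0) (Ordinal n0) (Iint0 r0pos)).
exact: normr_ge0.
Qed.

Lemma Sn_le_supn (y : CC) : Sn y <= supn y.
Proof.
apply: Sn_le; first exact: supn_ge0.
move=> i t It; rewrite supn_eq; have := supd_ge r0pos y (C0 n r0) i It.
by rewrite ev_C0 subr0.
Qed.

Lemma supn_sqr_le (y : CC) : supn y ^+ 2 <= n%:R * Sn y ^+ 2.
Proof.
have h : supn y <= Num.sqrt (n%:R * Sn y ^+ 2).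
  apply: ge_sup; first by exists (eucl (fun i => ev y i 0)); exists 0 => //; exact: Iint0.
  move=> _ [t It <-]; apply: eucl_le_cst => i; exact: Sn_ge.
have := lerXn2r 2 (supn_ge0 y) (sqrtr_ge0 _) h.
by rewrite sqr_sqrtr // mulr_ge0 // sqr_ge0.
Qed.

Lemma Sn_cst c : 0 <= c -> Sn (cstC n r0 (- c)) <= c.
Proof. by move=> c0; apply: Sn_le => // i t _; rewrite ev_cstC normrN ger0_norm. Qed.

End Part2a.
Lemma lip_cont (R : realType) (g : R -> R) L : 0 < L ->
  (forall s s', `|g s - g s'| <= L * `|s - s'|) -> continuous g.
Proof.
move=> L0 H x; apply/cvgrPdist_lt => e e0.
near=> z; apply: le_lt_trans (H x z) _; rewrite -ltr_pdivlMl //.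
near: z; apply: cvgr_dist_lt => //.
by rewrite mulr_gt0 // invr_gt0.
Unshelve. all: by end_near. Qed.

Section Part1.
Variables (R : realType) (n : nat) (r0 : R).
Hypothesis r0pos : 0 < r0.
Hypothesis n0 : (0 < n)%N.
Local Notation CC := (C n r0).
Variable D : CC -> 'I_n -> R.
Hypothesis hA1 : A1 D.
Variable k : R.
Hypothesis k01 : 0 < k < 1.
Hypothesis hk : forall x y, eucl (fun i => D x i - D y i) <= k * \big[Num.max/0]_(i < n) supdi i x y.

Lemma Dlip (x y : CC) i : `|D x i - D y i| <= k * \big[Num.max/0]_(i < n) supdi i x y.
Proof. exact: le_trans (coord_le_eucl (fun i => D x i - D y i) i) (hk x y). Qed.

Lemma Dlip_le (x y : CC) i M : 0 <= M -> (forall j, supdi j x y <= M) -> `|D x i - D y i| <= k * M.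
Proof.
move=> M0 H; apply: le_trans (Dlip x y i) _.
by apply: ler_wpM2l; [case/andP: k01 => /ltW | exact: maxsupdi_le].
Qed.

Lemma supdi_meet (x y : CC) s s' j : supdi j (meetC x y s) (meetC x y s') <= `|s - s'|.
Proof.
apply: (supdi_le r0pos) => t _; rewrite !ev_meetC.
set m := Num.min _ _.
have -> : m - s - (m - s') = - (s - s') by ring.
by rewrite normrN.
Qed.

Lemma part1 i (x y : CC) : Dres D x i = Dres D y i ->
  exists z : CC, le_meet z x y /\ Dres D z i = Dres D x i /\ Dres D z i = Dres D y i.
Proof.
move=> exy; set a := Dres D x i.
have [k0 k1] : 0 < k /\ k < 1 by case/andP: k01.
pose g s := Dres D (meetC x y s) i.
have gL s s' : `|g s - g s'| <= (1 + k) * `|s - s'|.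
  rewrite /g /Dres !ev_meetC.
  have := Dlip_le i (normr_ge0 (s - s')) (fun j => supdi_meet x y s s' j).
  set d := D _ i - D _ i.
  have -> : Num.min (ev x i 0) (ev y i 0) - s - D (meetC x y s) i -
     (Num.min (ev x i 0) (ev y i 0) - s' - D (meetC x y s') i) = - (s - s') - d.
    by rewrite /d; ring.
  move=> hd; apply: le_trans (ler_normB _ _) _; rewrite normrN mulrDl mul1r.
  exact: lerD.
have gc : continuous g by apply: (lip_cont _ gL); lra.
have g0 : a <= g 0.
  rewrite /g /Dres ev_meetC subr0.
  have le1 : leC (meetC x y 0) x by move=> j t _; rewrite ev_meetC subr0 ge_min lexx.
  have le2 : leC (meetC x y 0) y by move=> j t _; rewrite ev_meetC subr0 ge_min lexx orbT.
  have h1 := hA1.2 _ _ le1 i; have h2 := hA1.2 _ _ le2 i.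
  case: (leP (ev x i 0) (ev y i 0)) => hxy.
    rewrite /a /Dres; lra.
  rewrite /a exy /Dres; lra.
pose b := (g 0 - a) / (1 - k).
have b0 : 0 <= b by apply: divr_ge0; lra.
have gb : g b <= a.
  have hd := Dlip_le i (normr_ge0 (b - 0)) (fun j => supdi_meet x y b 0 j).
  rewrite subr0 (ger0_norm b0) ler_norml in hd; case/andP: hd => hd2 _.
  have hb : b * (1 - k) = g 0 - a by rewrite /b divfK //; apply: lt0r_neq0; lra.
  have -> : g b = g 0 - b - (D (meetC x y b) i - D (meetC x y 0) i).
    by rewrite /g /Dres !ev_meetC; ring.
  nra.
have [c cin gc_eq] : exists2 c, c \in `[0, b] & g c = a.
  apply: IVT => //; first by apply: continuous_subspaceT.
  by rewrite ge_min gb /= le_max g0 orbT.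
move: cin; rewrite in_itv /= => /andP[c0 _].
exists (meetC x y c); split; last by split => //; rewrite -exy.
by move=> j t _; rewrite ev_meetC lerBlDr lerDl.
Qed.

Lemma supdi_cst (x : CC) c j : 0 <= c -> supdi j x (cstC n r0 (-c)) <= Sn x + c.
Proof.
move=> c0; apply: (supdi_le r0pos) => t It; rewrite ev_cstC opprK.
apply: le_trans (ler_normD _ _) _; rewrite (ger0_norm c0) lerD2r.
exact: Sn_ge.
Qed.

Lemma cst_leD (x : CC) c : 0 <= c -> (1 + k) * Sn x <= (1 - k) * c ->
  leD D (cstC n r0 (-c)) x.
Proof.
move=> c0 hc; have [k0 k1] : 0 < k /\ k < 1 by case/andP: k01.
have S0 := Sn_ge0 r0pos n0 x.
have Sc : Sn x <= c by nra.
split.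
  move=> i t It; rewrite ev_cstC.
  have := Sn_ge r0pos x i It; rewrite ler_norml => /andP[h _]; lra.
move=> i; rewrite /Dres ev_cstC.
have hd := Dlip_le i (addr_ge0 S0 c0) (fun j => supdi_cst x j c0).
rewrite ler_norml in hd; case/andP: hd => _ hd.
have := Sn_ge r0pos x i (Iint0 r0pos); rewrite ler_norml => /andP[h _].
nra.
Qed.


Local Notation CM := (Cm n r0).

Definition Kc := (1 + k) / (1 - k).
Definition Mp (p : CC * CC) : nat := (truncn (Kc * (Sn p.1 + Sn p.2))).+1.
Definition phi (p : CM * CM) : CM := cstC n r0 (- (Mp p)%:R).

Lemma Kc_ge0 : 0 <= Kc.
Proof. have [k0 k1] : 0 < k /\ k < 1 by case/andP: k01. by apply: divr_ge0; lra. Qed.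

Lemma Kc_eq : (1 - k) * Kc = 1 + k.
Proof.
have [k0 k1] : 0 < k /\ k < 1 by case/andP: k01.
by rewrite /Kc mulrC divfK //; apply: lt0r_neq0; lra.
Qed.

Lemma Mp_ge (p : CC * CC) : Kc * (Sn p.1 + Sn p.2) <= (Mp p)%:R.
Proof. exact/ltW/truncnS_gt. Qed.

Lemma Mp_le (p : CC * CC) : (Mp p)%:R <= Kc * (Sn p.1 + Sn p.2) + 1.
Proof.
have g0 : 0 <= Kc * (Sn p.1 + Sn p.2).
  by apply: mulr_ge0; [exact: Kc_ge0 | apply: addr_ge0; exact: Sn_ge0].
have := truncn_itv g0; rewrite /Mp => /andP[h _].
by rewrite -addn1 natrD lerD2r.
Qed.

Lemma phi_leD1 (p : CM * CM) : leD D (phi p) p.1.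
Proof.
have [k0 k1] : 0 < k /\ k < 1 by case/andP: k01.
apply: cst_leD => //; have := Mp_ge p; have := Kc_eq; have := Kc_ge0.
have := Sn_ge0 r0pos n0 p.1; have := Sn_ge0 r0pos n0 p.2.
set M := (Mp p)%:R; set K := Kc; set a := Sn p.1; set b := Sn p.2.
move=> b0 a0 K0 hK hM; rewrite -hK.
have : K * a <= M by apply: le_trans hM; rewrite ler_wpM2l // lerDl.
nra.
Qed.

Lemma phi_leD2 (p : CM * CM) : leD D (phi p) p.2.
Proof.
have [k0 k1] : 0 < k /\ k < 1 by case/andP: k01.
apply: cst_leD => //; have := Mp_ge p; have := Kc_eq; have := Kc_ge0.
have := Sn_ge0 r0pos n0 p.1; have := Sn_ge0 r0pos n0 p.2.
set M := (Mp p)%:R; set K := Kc; set a := Sn p.1; set b := Sn p.2.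
move=> b0 a0 K0 hK hM; rewrite -hK.
have : K * b <= M by apply: le_trans hM; rewrite ler_wpM2l // lerDr.
nra.
Qed.

Lemma gK_meas : measurable_fun [set: CM * CM]
  (fun p : CM * CM => Kc * (Sn p.1 + Sn p.2)).
Proof.
apply: measurable_realfun.measurable_funM; first exact: measurable_cst.
apply: measurable_realfun.measurable_funD.
  exact: (measurableT_comp (Sn_meas r0pos n0) measurable_fst).
exact: (measurableT_comp (Sn_meas r0pos n0) measurable_snd).
Qed.

Lemma phi_meas : measurable_fun [set: CM * CM] phi.
Proof.
move=> _ B _; rewrite setTI.
have -> : phi @^-1` B = \bigcup_j ([set p | Mp p = j] `&` [set p | B (cstC n r0 (- j%:R))]).
  apply/seteqP; split => p /=; first by move=> Bp; exists (Mp p).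
  by move=> [j _ [<-]].
apply: bigcupT_measurable => j; apply: measurableI.
  case: j => [|j].
    by have -> : [set p : CM * CM | Mp p = 0%N] = set0 by apply/seteqP; split.
  have -> : [set p : CM * CM | Mp p = j.+1] =
      [set: CM * CM] `&` ((fun p : CM * CM => Kc * (Sn p.1 + Sn p.2)) @^-1` `[j%:R, j.+1%:R[).
    apply/seteqP; split => p /=.
      move=> [] hj; rewrite in_itv /= -(@truncn_eq _ _ j); first by rewrite hj.
      by apply: mulr_ge0; [exact: Kc_ge0 | apply: addr_ge0; exact: Sn_ge0].
    move=> [_]; rewrite in_itv /= -(@truncn_eq _ _ j) => [/eqP <- //|].
    by apply: mulr_ge0; [exact: Kc_ge0 | apply: addr_ge0; exact: Sn_ge0].
  by apply: gK_meas => //; exact: measurable_itv.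
case: (pselect (B (cstC n r0 (- j%:R)))) => h.
  by have -> : [set p : CM * CM | B (cstC n r0 (- j%:R))] = setT by apply/seteqP; split.
by have -> : [set p : CM * CM | B (cstC n r0 (- j%:R))] = set0 by apply/seteqP; split.
Qed.


HB.instance Definition _ := isMeasurableFun.Build _ _ _ _ phi phi_meas.

Lemma bint d (T : measurableType d) (P : probability T R) (h : T -> R) M :
  measurable_fun setT h -> (forall x, `|h x| <= M) -> P.-integrable setT (EFin \o h).
Proof.
move=> mh hM; apply: measurable_bounded_integrable => //.
  apply: (le_lt_trans (probability_le1 P measurableT)); exact: ltry.
rewrite /bounded_near; apply: filterS (nbhs_pinfty_ge (num_real M)) => M0 hM0 x _ /=.
exact: le_trans (hM x) hM0.
Qed.

Section Meas.
Variables mu nu : probability CM R.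
Local Notation P := (mu \x nu)%E.

Lemma leD_mu : leDmeas D (distribution P phi) mu.
Proof.
move=> f [mf [M hM]] finc.
have mf' := (measurable_realfun.measurable_EFinP _ f).2 mf.
rewrite integral_distribution //; last first.
  by apply: (bint _ (M := M)) => //; exact: measurableT_comp.
apply: (@le_trans _ _ (\int[P]_p (f p.1)%:E)%E).
  apply: le_integral => //.
  - by apply: (bint _ (M := M)) => //; exact: measurableT_comp.
  - by apply: (bint _ (M := M)) => //; exact: measurableT_comp.
  - by move=> p _ /=; rewrite lee_fin; apply: finc; exact: phi_leD1.
rewrite -integral12_prod_meas1; last first.
  by apply: (bint _ (M := M) (h := fun p : CM * CM => f p.1)) => //; exact: measurableT_comp.
rewrite le_eqVlt; apply/orP; left; apply/eqP; apply: eq_integral => x _.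
rewrite /fubini_F /= integral_cst // [X in (_ * X)%E](_ : _ = 1%E) ?mule1 //; exact: probability_setT.
Qed.

Lemma leD_nu : leDmeas D (distribution P phi) nu.
Proof.
move=> f [mf [M hM]] finc.
have mf' := (measurable_realfun.measurable_EFinP _ f).2 mf.
rewrite integral_distribution //; last first.
  by apply: (bint _ (M := M)) => //; exact: measurableT_comp.
apply: (@le_trans _ _ (\int[P]_p (f p.2)%:E)%E).
  apply: le_integral => //.
  - by apply: (bint _ (M := M)) => //; exact: measurableT_comp.
  - by apply: (bint _ (M := M)) => //; exact: measurableT_comp.
  - by move=> p _ /=; rewrite lee_fin; apply: finc; exact: phi_leD2.
rewrite -integral21_prod_meas1; last first.
  by apply: (bint _ (M := M) (h := fun p : CM * CM => f p.2)) => //; exact: measurableT_comp.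
rewrite le_eqVlt; apply/orP; left; apply/eqP; apply: eq_integral => x _.
rewrite /fubini_G /= integral_cst // [X in (_ * X)%E](_ : _ = 1%E) ?mule1 //; exact: probability_setT.
Qed.


Lemma mu_sn (Q : probability CM R) : P2 Q -> (\int[Q]_x (Sn x ^+ 2)%:E < +oo)%E.
Proof.
move=> hQ; apply: le_lt_trans hQ.
apply: int_mono_nm => x; first by rewrite lee_fin sqr_ge0.
rewrite lee_fin; apply: lerXn2r; rewrite ?nnegrE ?Sn_ge0 ?supn_ge0 //.
exact: Sn_le_supn.
Qed.

Lemma mSn2 : measurable_fun [set: CM] (fun x : CM => Sn x ^+ 2).
Proof. exact: measurable_realfun.measurable_funX (Sn_meas r0pos n0). Qed.

Lemma fin1 : P2 mu -> (\int[P]_p (Sn p.1 ^+ 2)%:E < +oo)%E.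
Proof.
move=> hmu; rewrite fubini_tonelli1; last 2 first.
- apply/(measurable_realfun.measurable_EFinP _ (fun p : CM * CM => Sn p.1 ^+ 2)).
  exact: (measurableT_comp mSn2 measurable_fst).
- by move=> p; rewrite lee_fin sqr_ge0.
rewrite (_ : (\int[mu]_x fubini_F nu _ x)%E = (\int[mu]_x (Sn x ^+ 2)%:E)%E); first exact: mu_sn.
apply: eq_integral => x _.
rewrite /fubini_F /= integral_cst // [X in (_ * X)%E](_ : _ = 1%E) ?mule1 //; exact: probability_setT.
Qed.

Lemma fin2 : P2 nu -> (\int[P]_p (Sn p.2 ^+ 2)%:E < +oo)%E.
Proof.
move=> hnu; rewrite fubini_tonelli2; last 2 first.
- apply/(measurable_realfun.measurable_EFinP _ (fun p : CM * CM => Sn p.2 ^+ 2)).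
  exact: (measurableT_comp mSn2 measurable_snd).
- by move=> p; rewrite lee_fin sqr_ge0.
rewrite (_ : (\int[nu]_x fubini_G mu _ x)%E = (\int[nu]_x (Sn x ^+ 2)%:E)%E); first exact: mu_sn.
apply: eq_integral => x _.
rewrite /fubini_G /= integral_cst // [X in (_ * X)%E](_ : _ = 1%E) ?mule1 //; exact: probability_setT.
Qed.


Lemma P2_dist : P2 mu -> P2 nu -> P2 (distribution P phi).
Proof.
move=> hmu hnu; rewrite /P2.
pose c3 : R := 3 * n%:R * (Kc ^+ 2 + 1).
have K0 := Kc_ge0.
have c30 : 0 <= c3 by rewrite /c3 mulr_ge0 // ?mulr_ge0 // addr_ge0 // sqr_ge0.
apply: (le_lt_trans (@int_mono_nm R _ _ (distribution P phi) (fun y : CM => (supn y ^+ 2)%:E) (fun y : CM => (n%:R * Sn y ^+ 2)%:E) _ _)).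
- by move=> y; rewrite lee_fin sqr_ge0.
- by move=> y; rewrite lee_fin; exact: supn_sqr_le.
rewrite ge0_integral_distribution; last 2 first.
- apply/(measurable_realfun.measurable_EFinP _ (fun y : CM => n%:R * Sn y ^+ 2)).
  apply: measurable_realfun.measurable_funM; [exact: measurable_cst | exact: mSn2].
- by move=> y; rewrite lee_fin mulr_ge0 // sqr_ge0.
have mA : measurable_fun [set: CM * CM] (fun p : CM * CM => (Sn p.1 ^+ 2)%:E).
  apply/(measurable_realfun.measurable_EFinP _ (fun p : CM * CM => Sn p.1 ^+ 2)).
  exact: (measurableT_comp mSn2 measurable_fst).
have mB : measurable_fun [set: CM * CM] (fun p : CM * CM => (Sn p.2 ^+ 2)%:E).
  apply/(measurable_realfun.measurable_EFinP _ (fun p : CM * CM => Sn p.2 ^+ 2)).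
  exact: (measurableT_comp mSn2 measurable_snd).
pose gg : CM * CM -> \bar R := fun p =>
   (c3%:E * ((Sn p.1 ^+ 2)%:E + (Sn p.2 ^+ 2)%:E + 1%:E))%E.
apply: (le_lt_trans (@int_mono_nm R _ _ P ((fun y : CM => (n%:R * Sn y ^+ 2)%:E) \o phi) gg _ _)).
- by move=> p; rewrite /= lee_fin mulr_ge0 // sqr_ge0.
- move=> p; rewrite /gg /= -!EFinD -EFinM lee_fin.
  have hs : Sn (cstC n r0 (- (Mp p)%:R)) <= (Mp p)%:R by apply: Sn_cst => //; exact: ler0n.
  have hM := Mp_le p.
  have s0 := Sn_ge0 r0pos n0 (phi p).
  have a0 := Sn_ge0 r0pos n0 p.1.
  have b0 := Sn_ge0 r0pos n0 p.2.
  have n0' : 0 <= n%:R :> R by [].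
  rewrite /phi in s0 *.
  set s := Sn _ in hs s0 *; set M := (Mp p)%:R in hs hM *.
  set a := Sn p.1 in hM a0 *; set b := Sn p.2 in hM b0 *.
  have h1 : s ^+ 2 <= (Kc * (a + b) + 1) ^+ 2.
    apply: lerXn2r; rewrite ?nnegrE //; first by rewrite addr_ge0 // mulr_ge0 // addr_ge0.
    exact: le_trans hs hM.
  have h2 : (Kc * (a + b) + 1) ^+ 2 <= 3 * (Kc ^+ 2 + 1) * (a ^+ 2 + b ^+ 2 + 1).
    have e1 : (Kc * (a + b) + 1) ^+ 2 <= 3 * ((Kc * a) ^+ 2 + (Kc * b) ^+ 2 + 1).
      have := sqr_ge0 (Kc * a - Kc * b); have := sqr_ge0 (Kc * a - 1);
      have := sqr_ge0 (Kc * b - 1).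
      rewrite !expr2; nra.
    apply: le_trans e1 _.
    have := sqr_ge0 Kc; have := sqr_ge0 a; have := sqr_ge0 b.
    rewrite !expr2; nra.
  have -> : c3 * (a ^+ 2 + b ^+ 2 + 1) = n%:R * (3 * (Kc ^+ 2 + 1) * (a ^+ 2 + b ^+ 2 + 1)).
    by rewrite /c3; ring.
  by apply: ler_wpM2l => //; exact: le_trans h1 h2.
have mF : measurable_fun [set: CM * CM]
    (fun x : CM * CM => ((Sn x.1 ^+ 2)%:E + (Sn x.2 ^+ 2)%:E + 1)%E).
  apply: emeasurable_funD => //; first exact: emeasurable_funD.
have F0 : forall x : CM * CM, [set: CM * CM] x -> (0 <= (Sn x.1 ^+ 2)%:E + (Sn x.2 ^+ 2)%:E + 1)%E.
  by move=> p _; rewrite !adde_ge0 // lee_fin sqr_ge0.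
rewrite /gg (ge0_integralZl _ measurableT mF F0); last by rewrite lee_fin.
apply: lte_mul_pinfty => //.
have mAB := emeasurable_funD mA mB.
have F1 : forall x : CM * CM, [set: CM * CM] x -> (0 <= (Sn x.1 ^+ 2)%:E + (Sn x.2 ^+ 2)%:E)%E.
  by move=> p _; rewrite !adde_ge0 // lee_fin sqr_ge0.
have F2 : forall x : CM * CM, [set: CM * CM] x -> (0 <= (1 : \bar R))%E by [].
have FA : forall x : CM * CM, [set: CM * CM] x -> (0 <= (Sn x.1 ^+ 2)%:E)%E.
  by move=> p _; rewrite lee_fin sqr_ge0.
have FB : forall x : CM * CM, [set: CM * CM] x -> (0 <= (Sn x.2 ^+ 2)%:E)%E.
  by move=> p _; rewrite lee_fin sqr_ge0.
rewrite (ge0_integralD _ measurableT F1 mAB F2 (measurable_cst _)).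
rewrite (ge0_integralD _ measurableT FA mA FB mB).
apply: lte_add_pinfty; first by apply: lte_add_pinfty; [exact: fin1 | exact: fin2].
rewrite integral_cst // mul1e.
apply: (le_lt_trans (probability_le1 P measurableT)); exact: ltry.
Qed.

Lemma part2 : P2 mu -> P2 nu ->
  exists mu' : probability CM R, P2 mu' /\ leDmeas D mu' mu /\ leDmeas D mu' nu.
Proof.
move=> h1 h2; exists (distribution P phi); split; first exact: P2_dist.
by split; [exact: leD_mu | exact: leD_nu].
Qed.

End Meas.

End Part1.

Unset Implicit Arguments.

Theorem lemma4p3 (R : realType) (n : nat) (r0 : R) (D : C n r0 -> 'I_n -> R) :
  (0 < n)%N -> 0 < r0 -> A1 D -> A5 D ->
  (forall (i : 'I_n) (x y : C n r0), Dres D x i = Dres D y i ->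
     exists z : C n r0, le_meet z x y /\ Dres D z i = Dres D x i /\ Dres D z i = Dres D y i)
  /\
  (forall mu nu : probability (Cm n r0) R, P2 mu -> P2 nu ->
     exists mu' : probability (Cm n r0) R, P2 mu' /\ leDmeas D mu' mu /\ leDmeas D mu' nu).
Proof.
move=> n0 r0pos hA1 [k k01 hk]; split.
  by move=> i x y h; apply: part1 => //; eassumption.
by move=> mu nu h1 h2; apply: part2 => //; eassumption.
Qed.
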